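(* In the quasitriangular Hopf algebra $U_q(H_1,H_2,X^\pm)$ with universal $R$-matrix $\mathcal R=\sum_i a_i\otimes b_i$ as in the context, let $u=\sum_i S(b_i)a_i$, $z=u\,S(u)$ and $r=u\,(S(u))^{-1}$. Then, with $E=K_2X^+$, $F=K_2^{-1}X^-$, $$u=e^{i\frac{\pi}{4}H_2^2}q^{-\frac14(H_1^2-H_2^2)}\left(1+(1-q^2)K_1^{-1}K_2^{-1}FE\right),\qquad S(u)=e^{i\frac{\pi}{4}H_2^2}q^{-\frac14(H_1^2-H_2^2)}\left(1+(1-q^2)EFK_1K_2\right),$$ $$z=e^{i\frac{\pi}{2}H_2^2}q^{-\frac12(H_1^2-H_2^2)}\left(1+(1-q^2)(K_1K_2EF+K_1^{-1}K_2^{-1}FE)\right),\qquad r=e^{-i\pi H_2}q^{-(H_1+H_2)}.$$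
   Context: $q$ is a deformation parameter and exponentials of the generators are understood formally. Set $K_1=q^{H_1/2}$, $K_2=e^{i\frac{\pi}{2}H_2}q^{H_2/2}$. $U_q(H_1,H_2,X^\pm)$ is the Hopf algebra generated by $H_1,H_2,X^\pm$ with relations $[H_1,H_2]=0$, $[H_1,X^\pm]=\pm2X^\pm$, $[H_2,X^\pm]=\mp2X^\pm$, $[X^+,X^-]=\frac{K_1K_2-K_1^{-1}K_2^{-1}}{q-q^{-1}}$, $(X^\pm)^2=0$; coproduct $\Delta H_i=H_i\otimes1+1\otimes H_i$, $\Delta X^+=X^+\otimes K_1+K_2^{-1}\otimes X^+$, $\Delta X^-=X^-\otimes K_2+K_1^{-1}\otimes X^-$; counit $\varepsilon(H_i)=\varepsilon(X^\pm)=0$; antipode $S(H_i)=-H_i$, $S(X^+)=-qK_1^{-1}K_2X^+$, $S(X^-)=qK_1K_2^{-1}X^-$. Its universal $R$-matrix is $\mathcal{R}=e^{-i\frac{\pi}{4}H_2\otimes H_2}q^{\frac14(H_1\otimes H_1-H_2\otimes H_2)}(1\otimes1+(1-q^2)E\otimes F)$ with $E=K_2X^+$, $F=K_2^{-1}X^-$. *)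

(* Defs.v *)
From HB Require Import structures.
From mathcomp Require Import all_boot all_order all_algebra.
From mathcomp Require Import complex.
From mathcomp Require Import reals sequences exp trigo.
Set Implicit Arguments. Unset Strict Implicit. Unset Printing Implicit Defensive.
Import GRing.Theory Num.Theory.
Local Open Scope ring_scope.
Local Open Scope complex_scope.

Definition cexp {R : realType} (z : R[i]) : R[i] :=
  let: a +i* b := z in (expR a * cos b) +i* (expR a * sin b).

(* "Exponentials of the generators are understood formally": an element of   *)
(* the Cartan part is a function phi(H1,H2) of the commuting generators,      *)
(* modelled as a function C -> C -> C (h1, h2); e.g. q^{H1/2} is             *)
(* (h1,h2) |-> exp(hb*h1/2) where q = exp(hb).                                *)
(* By the relations (X^+)^2 = (X^-)^2 = 0 and [X^+,X^-] = ..., every element   *)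
(* is uniquely  phi_1(H) + phi_p(H) X^+ + phi_m(H) X^- + phi_pm(H) X^+X^-     *)
(* (coefficients written on the left); an element of U is the family of the  *)
(* four coefficient functions, indexed by the PBW monomials below.            *)
Inductive mon := M1 | Mp | Mm | Mpm.   (* 1, X^+, X^-, X^+ X^- *)

Section Model.
Variable R : realType.
Variable hb : R[i].

Notation C := (R[i]).
Definition W := C -> C -> C.                       (* functions of (H1,H2) *)
Definition U := mon -> C -> C -> C.
Definition T := mon -> mon -> C -> C -> C -> C -> C.
  (* elements of the completed U (x) U : coefficient of (x (x) y) is a
     function phi(H1(x)1, H2(x)1, 1(x)H1, 1(x)H2) written on the left *)

Definition q : C := cexp hb.
Definition ipi : C := 'i * (pi : R)%:C.

Definition k1 : W := fun h1 h2 => cexp (hb * h1 / 2).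
Definition k2 : W := fun h1 h2 => cexp (ipi * h2 / 2) * cexp (hb * h2 / 2).
Definition cc : W := fun h1 h2 =>
  (k1 h1 h2 * k2 h1 h2 - (k1 h1 h2 * k2 h1 h2)^-1) / (q - q^-1).

Definition msum (f : mon -> C) : C := f M1 + f Mp + f Mm + f Mpm.

(* commutation with Cartan functions:  x phi(H1,H2) = phi(H1+sh1 x,H2+sh2 x) x,
   from [H1,X^+-] = +-2 X^+-, [H2,X^+-] = -+2 X^+- *)
Definition sh1 (x : mon) : C := match x with Mp => -2 | Mm => 2 | _ => 0 end.
Definition sh2 (x : mon) : C := match x with Mp => 2 | Mm => -2 | _ => 0 end.

Definition delta (x z : mon) : C :=
  match x, z with
  | M1, M1 | Mp, Mp | Mm, Mm | Mpm, Mpm => 1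
  | _, _ => 0 end.

(* coefficient (a function of H, on the left) of the monomial z in the
   product of monomials x * y, using (X^+-)^2 = 0 and
   X^- X^+ = X^+ X^- - (K1K2 - K1^-1K2^-1)/(q-q^-1) *)
Definition pb (x y z : mon) : W := fun h1 h2 =>
  match x, y with
  | M1, _ => delta y z
  | _, M1 => delta x z
  | Mp, Mm => delta Mpm z
  | Mm, Mp => delta Mpm z - delta M1 z * cc h1 h2
  | Mm, Mpm => - delta Mm z * cc h1 h2
  | Mpm, Mp => - delta Mp z * cc (h1 - 2) (h2 + 2)
  | Mpm, Mpm => - delta Mpm z * cc (h1 - 2) (h2 + 2)
  | _, _ => 0 end.

Definition umul (a b : U) : U := fun z h1 h2 =>
  msum (fun x => msum (fun y =>
    a x h1 h2 * b y (h1 + sh1 x) (h2 + sh2 x) * pb x y z h1 h2)).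
Definition uadd (a b : U) : U := fun z h1 h2 => a z h1 h2 + b z h1 h2.
Definition uscale (c : C) (a : U) : U := fun z h1 h2 => c * a z h1 h2.
Definition cart (f : W) : U := fun z h1 h2 => delta M1 z * f h1 h2.
Definition basis (x : mon) : U := fun z _ _ => delta x z.
Definition uone : U := cart (fun _ _ => 1).
Definition usum4 (f : mon -> U) : U :=
  uadd (uadd (uadd (f M1) (f Mp)) (f Mm)) (f Mpm).

Definition Xp : U := basis Mp.
Definition Xm : U := basis Mm.
Definition K1 : U := cart k1.
Definition K2 : U := cart k2.
Definition K1inv : U := cart (fun h1 h2 => (k1 h1 h2)^-1).
Definition K2inv : U := cart (fun h1 h2 => (k2 h1 h2)^-1).
Definition Eg : U := umul K2 Xp.
Definition Fg : U := umul K2inv Xm.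

(* antipode: S(H_i) = -H_i (so S(phi(H)) = phi(-H)),
   S(X^+) = -q K1^-1 K2 X^+,  S(X^-) = q K1 K2^-1 X^-, anti-multiplicative *)
Definition Smon (x : mon) : U :=
  match x with
  | M1 => uone
  | Mp => umul (uscale (- q) (umul K1inv K2)) Xp
  | Mm => umul (uscale q (umul K1 K2inv)) Xm
  | Mpm => umul (umul (uscale q (umul K1 K2inv)) Xm)
                (umul (uscale (- q) (umul K1inv K2)) Xp)
  end.
Definition antipode (a : U) : U :=
  usum4 (fun x => umul (Smon x) (cart (fun h1 h2 => a x (- h1) (- h2)))).

Definition tmul (s t : T) : T := fun z w h1 h2 g1 g2 =>
  msum (fun x => msum (fun y => msum (fun x' => msum (fun y' =>
    s x y h1 h2 g1 g2 * t x' y' (h1 + sh1 x) (h2 + sh2 x) (g1 + sh1 y) (g2 + sh2 y)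
    * pb x x' z h1 h2 * pb y y' w g1 g2)))).
Definition tadd (s t : T) : T := fun x y h1 h2 g1 g2 => s x y h1 h2 g1 g2 + t x y h1 h2 g1 g2.
Definition tscale (c : C) (s : T) : T := fun x y h1 h2 g1 g2 => c * s x y h1 h2 g1 g2.
Definition tens (a b : U) : T := fun x y h1 h2 g1 g2 => a x h1 h2 * b y g1 g2.

(* universal R-matrix
   e^{-i pi/4 H2(x)H2} q^{1/4 (H1(x)H1 - H2(x)H2)} (1(x)1 + (1-q^2) E(x)F) *)
Definition Rcart : T := fun x y h1 h2 g1 g2 =>
  delta M1 x * delta M1 y *
  (cexp (- ipi / 4 * (h2 * g2)) * cexp (hb / 4 * (h1 * g1 - h2 * g2))).
Definition Rmat : T :=
  tmul Rcart (tadd (tens uone uone) (tscale (1 - q ^+ 2) (tens Eg Fg))).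

(* u = sum_i S(b_i) a_i for R = sum_i a_i (x) b_i : the (continuous) extension
   of a (x) b |-> S(b) a to the completion.  On a term
   phi(H(x)1, 1(x)H) (x (x) y) = sum_i f_i(H) x (x) g_i(H) y it gives
   sum_i S(y) g_i(-H) f_i(H) x = S(y) phi(H, -H) x. *)
Definition drinfeld_u (t : T) : U :=
  usum4 (fun x => usum4 (fun y =>
    umul (Smon y) (umul (cart (fun h1 h2 => t x y h1 h2 (- h1) (- h2))) (basis x)))).

Definition Gu : W := fun h1 h2 =>
  cexp (ipi / 4 * h2 ^+ 2) * cexp (- hb / 4 * (h1 ^+ 2 - h2 ^+ 2)).
Definition Gz : W := fun h1 h2 =>
  cexp (ipi / 2 * h2 ^+ 2) * cexp (- hb / 2 * (h1 ^+ 2 - h2 ^+ 2)).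
Definition Gr : W := fun h1 h2 =>
  cexp (- ipi * h2) * cexp (- hb * (h1 + h2)).

End Model.

(* Main.v *)
Require Import Defs.
From HB Require Import structures.
From mathcomp Require Import all_boot all_order all_algebra.
From mathcomp Require Import complex.
From mathcomp Require Import reals sequences exp trigo.
From mathcomp Require Import ring.
From Stdlib Require Import FunctionalExtensionality.
Import GRing.Theory Num.Theory.
Local Open Scope ring_scope.
Local Open Scope complex_scope.

Lemma cexpD {R : realType} (x y : R[i]) : cexp (x + y) = cexp x * cexp y.
Proof.
case: x => a b; case: y => c d; rewrite /cexp /=.
apply/eqP; rewrite eq_complex /=; apply/andP; split; apply/eqP;
rewrite expRD ?cosD ?sinD; ring.
Qed.

Lemma cexp0 {R : realType} : cexp (0 : R[i]) = 1.
Proof.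
rewrite /cexp /=. apply/eqP; rewrite eq_complex /= expR0 cos0 sin0 mulr1 mulr0 !eqxx //.
Qed.

Lemma cexpN {R : realType} (x : R[i]) : cexp (- x) = (cexp x)^-1.
Proof.
have h : cexp x * cexp (- x) = 1 by rewrite -cexpD subrr cexp0.
have nz : cexp x != 0 by apply/eqP => e; move: h; rewrite e mul0r => /eqP; rewrite eq_sym oner_eq0.
by apply: (mulfI nz); rewrite h mulfV.
Qed.

Lemma cexp_neq0 {R : realType} (x : R[i]) : cexp x != 0.
Proof.
have h : cexp x * cexp (- x) = 1 by rewrite -cexpD subrr cexp0.
by apply/eqP => e; move: h; rewrite e mul0r => /eqP; rewrite eq_sym oner_eq0.
Qed.

Lemma cexp_ipi {R : realType} : cexp (ipi R) = -1.
Proof.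
rewrite /ipi /cexp /=. apply/eqP; rewrite eq_complex /=.
rewrite ?mul0r ?mulr0 ?mul1r ?subr0 ?addr0 ?add0r ?oppr0 ?expR0 ?cospi ?sinpi ?mul1r ?eqxx //=.
Qed.

Lemma two_neq0 {R : realType} : (2 : R[i]) != 0.
Proof. by rewrite pnatr_eq0. Qed.

Definition e1 {R : realType} (hb x : R[i]) := cexp (hb * x / 2).
Definition e2 {R : realType} (hb y : R[i]) := cexp (ipi R * y / 2) * cexp (hb * y / 2).

Lemma e1D {R : realType} (hb x y : R[i]) : e1 hb (x + y) = e1 hb x * e1 hb y.
Proof. by rewrite /e1 -cexpD; congr cexp; ring. Qed.
Lemma e1N {R : realType} (hb x : R[i]) : e1 hb (- x) = (e1 hb x)^-1.
Proof. by rewrite /e1 -cexpN; congr cexp; ring. Qed.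
Lemma e2E {R : realType} (hb y : R[i]) : e2 hb y = cexp ((ipi R + hb) * y / 2).
Proof. by rewrite /e2 -cexpD; congr cexp; ring. Qed.
Lemma e2D {R : realType} (hb x y : R[i]) : e2 hb (x + y) = e2 hb x * e2 hb y.
Proof. by rewrite !e2E -cexpD; congr cexp; ring. Qed.
Lemma e2N {R : realType} (hb x : R[i]) : e2 hb (- x) = (e2 hb x)^-1.
Proof. by rewrite !e2E -cexpN; congr cexp; ring. Qed.
Lemma e1_2 {R : realType} (hb : R[i]) : e1 hb 2 = q hb.
Proof. rewrite /e1 /q; congr cexp. by rewrite mulfK // two_neq0. Qed.
Lemma e2_2 {R : realType} (hb : R[i]) : e2 hb 2 = - q hb.
Proof. rewrite /e2 /q !mulfK ?two_neq0 // cexp_ipi; ring. Qed.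
Lemma e1_neq0 {R : realType} (hb x : R[i]) : e1 hb x != 0.
Proof. exact: cexp_neq0. Qed.
Lemma e2_neq0 {R : realType} (hb x : R[i]) : e2 hb x != 0.
Proof. by rewrite e2E cexp_neq0. Qed.
Lemma q_neq0 {R : realType} (hb : R[i]) : q hb != 0.
Proof. exact: cexp_neq0. Qed.
Lemma Gu_neq0 {R : realType} (hb x y : R[i]) : Gu hb x y != 0.
Proof. by rewrite /Gu mulf_neq0 // cexp_neq0. Qed.
Lemma GuN {R : realType} (hb x y : R[i]) : Gu hb (- x) (- y) = Gu hb x y.
Proof. by rewrite /Gu !sqrrN. Qed.
Lemma e1_sq {R : realType} (hb x : R[i]) : (e1 hb x) ^+ 2 = cexp (hb * x).
Proof. by rewrite /e1 expr2 -cexpD; congr cexp; field. Qed.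
Lemma e2_sq {R : realType} (hb x : R[i]) : (e2 hb x) ^+ 2 = cexp ((ipi R + hb) * x).
Proof. by rewrite e2E expr2 -cexpD; congr cexp; field. Qed.
Lemma Gu_m {R : realType} (hb x y : R[i]) :
  Gu hb (x + 2) (y - 2) = - Gu hb x y / (e1 hb x * e2 hb y) ^+ 2.
Proof.
rewrite exprMn e1_sq e2_sq -[- Gu hb x y]mulN1r -cexp_ipi /Gu invfM -!cexpN -!cexpD.
congr cexp. by rewrite /ipi; field.
Qed.
Lemma Gu_p {R : realType} (hb x y : R[i]) :
  Gu hb (x - 2) (y + 2) = - Gu hb x y * (e1 hb x * e2 hb y) ^+ 2.
Proof.
rewrite exprMn e1_sq e2_sq -[- Gu hb x y]mulN1r -cexp_ipi /Gu -!cexpD.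
congr cexp. by rewrite /ipi; field.
Qed.

Definition mk {R : realType} (a1 ap am apm : W R) : U R :=
  fun z => match z with M1 => a1 | Mp => ap | Mm => am | Mpm => apm end.
Definition z0 {R : realType} : W R := fun _ _ => 0.

Lemma U_eta {R : realType} (a : U R) : a = mk (a M1) (a Mp) (a Mm) (a Mpm).
Proof. by apply: functional_extensionality_dep => -[]. Qed.

Lemma mk_ext {R : realType} (a1 ap am apm b1 bp bm bpm : W R) :
  (forall h1 h2, a1 h1 h2 = b1 h1 h2) -> (forall h1 h2, ap h1 h2 = bp h1 h2) ->
  (forall h1 h2, am h1 h2 = bm h1 h2) -> (forall h1 h2, apm h1 h2 = bpm h1 h2) ->
  mk a1 ap am apm = mk b1 bp bm bpm.
Proof.
move=> e1 e2 e3 e4.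
have fe : forall f g : W R, (forall h1 h2, f h1 h2 = g h1 h2) -> f = g.
  by move=> f g e; do 2 (apply: functional_extensionality_dep => ?); apply: e.
by rewrite (fe _ _ e1) (fe _ _ e2) (fe _ _ e3) (fe _ _ e4).
Qed.

Lemma umul_mk {R : realType} (hb : R[i]) (a1 ap am apm b1 bp bm bpm : W R) :
  umul hb (mk a1 ap am apm) (mk b1 bp bm bpm) =
  mk (fun h1 h2 => a1 h1 h2 * b1 h1 h2 - am h1 h2 * bp (h1 + 2) (h2 - 2) * cc hb h1 h2)
     (fun h1 h2 => a1 h1 h2 * bp h1 h2 + ap h1 h2 * b1 (h1 - 2) (h2 + 2)
                   - apm h1 h2 * bp h1 h2 * cc hb (h1 - 2) (h2 + 2))
     (fun h1 h2 => a1 h1 h2 * bm h1 h2 + am h1 h2 * b1 (h1 + 2) (h2 - 2)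
                   - am h1 h2 * bpm (h1 + 2) (h2 - 2) * cc hb h1 h2)
     (fun h1 h2 => a1 h1 h2 * bpm h1 h2 + apm h1 h2 * b1 h1 h2
                   + ap h1 h2 * bm (h1 - 2) (h2 + 2) + am h1 h2 * bp (h1 + 2) (h2 - 2)
                   - apm h1 h2 * bpm h1 h2 * cc hb (h1 - 2) (h2 + 2)).
Proof.
apply: functional_extensionality_dep => z.
do 2 (apply: functional_extensionality_dep => ?).
by case: z; rewrite /umul /msum /= ?addr0; ring.
Qed.

Lemma uadd_mk {R : realType} (a1 ap am apm b1 bp bm bpm : W R) :
  uadd (mk a1 ap am apm) (mk b1 bp bm bpm) =
  mk (fun h1 h2 => a1 h1 h2 + b1 h1 h2) (fun h1 h2 => ap h1 h2 + bp h1 h2)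
     (fun h1 h2 => am h1 h2 + bm h1 h2) (fun h1 h2 => apm h1 h2 + bpm h1 h2).
Proof. by apply: functional_extensionality_dep => -[]. Qed.

Lemma uscale_mk {R : realType} (c : R[i]) (a1 ap am apm : W R) :
  uscale c (mk a1 ap am apm) =
  mk (fun h1 h2 => c * a1 h1 h2) (fun h1 h2 => c * ap h1 h2)
     (fun h1 h2 => c * am h1 h2) (fun h1 h2 => c * apm h1 h2).
Proof. by apply: functional_extensionality_dep => -[]. Qed.

Lemma cart_mk {R : realType} (f : W R) : cart f = mk f z0 z0 z0.
Proof.
apply: functional_extensionality_dep => -[]; do 2 (apply: functional_extensionality_dep => ?);
by rewrite /cart /z0 /= ?mul1r ?mul0r.
Qed.

Lemma basis_mk {R : realType} (x : mon) : @basis R x =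
  match x with
  | M1 => mk (fun _ _ => 1) z0 z0 z0
  | Mp => mk z0 (fun _ _ => 1) z0 z0
  | Mm => mk z0 z0 (fun _ _ => 1) z0
  | Mpm => mk z0 z0 z0 (fun _ _ => 1) end.
Proof. by case: x; apply: functional_extensionality_dep => -[]. Qed.

Lemma k1E {R : realType} (hb x y : R[i]) : k1 hb x y = e1 hb x. Proof. by []. Qed.
Lemma k2E {R : realType} (hb x y : R[i]) : k2 hb x y = e2 hb y. Proof. by []. Qed.
Lemma ccE {R : realType} (hb x y : R[i]) : cc hb x y =
  (e1 hb x * e2 hb y - (e1 hb x * e2 hb y)^-1) / (q hb - (q hb)^-1).
Proof. by []. Qed.
Lemma e1_0 {R : realType} (hb : R[i]) : e1 hb 0 = 1.
Proof. by rewrite /e1 mulr0 mul0r cexp0. Qed.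
Lemma e2_0 {R : realType} (hb : R[i]) : e2 hb 0 = 1.
Proof. by rewrite e2E mulr0 mul0r cexp0. Qed.

Lemma qq_neq0 {R : realType} (hb : R[i]) : q hb ^+ 2 != 1 -> q hb - (q hb)^-1 != 0.
Proof.
move=> h; apply/eqP => e; move/eqP: h; apply.
have nz := q_neq0 hb.
have : q hb * (q hb - (q hb)^-1) = 0 by rewrite e mulr0.
rewrite mulrBr mulfV // => /eqP; rewrite subr_eq0 => /eqP <-; by rewrite expr2.
Qed.

Lemma e1_p2 {R : realType} (hb x : R[i]) : e1 hb (x + 2) = e1 hb x * q hb.
Proof. by rewrite e1D e1_2. Qed.
Lemma e1_m2 {R : realType} (hb x : R[i]) : e1 hb (x - 2) = e1 hb x / q hb.
Proof. by rewrite e1D e1N e1_2. Qed.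
Lemma e2_p2 {R : realType} (hb x : R[i]) : e2 hb (x + 2) = - e2 hb x * q hb.
Proof. by rewrite e2D e2_2 mulrN mulNr. Qed.
Lemma e2_m2 {R : realType} (hb x : R[i]) : e2 hb (x - 2) = - e2 hb x / q hb.
Proof. by rewrite e2D e2N e2_2 invrN mulrN mulNr. Qed.

Ltac norm := rewrite /z0 ?k1E ?k2E ?ccE;
  do 4 rewrite ?addr0 ?e1_p2 ?e1_m2 ?e2_p2 ?e2_m2 ?e1N ?e2N ?GuN ?Gu_m ?Gu_p.

Lemma K1_mk {R : realType} (hb : R[i]) : K1 hb = mk (k1 hb) z0 z0 z0. Proof. exact: cart_mk. Qed.
Lemma K2_mk {R : realType} (hb : R[i]) : K2 hb = mk (k2 hb) z0 z0 z0. Proof. exact: cart_mk. Qed.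
Lemma K1inv_mk {R : realType} (hb : R[i]) : K1inv hb = mk (fun h1 h2 => (k1 hb h1 h2)^-1) z0 z0 z0. Proof. exact: cart_mk. Qed.
Lemma K2inv_mk {R : realType} (hb : R[i]) : K2inv hb = mk (fun h1 h2 => (k2 hb h1 h2)^-1) z0 z0 z0. Proof. exact: cart_mk. Qed.
Lemma uone_mk {R : realType} : @uone R = mk (fun _ _ => 1) z0 z0 z0. Proof. exact: cart_mk. Qed.
Lemma Xp_mk {R : realType} : @Xp R = mk z0 (fun _ _ => 1) z0 z0. Proof. exact: (basis_mk Mp). Qed.
Lemma Xm_mk {R : realType} : @Xm R = mk z0 z0 (fun _ _ => 1) z0. Proof. exact: (basis_mk Mm). Qed.

Ltac tomk := rewrite ?K1_mk ?K2_mk ?K1inv_mk ?K2inv_mk ?uone_mk ?Xp_mk ?Xm_mk ?cart_mk;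
  rewrite ?uscale_mk ?uadd_mk ?umul_mk ?uscale_mk ?uadd_mk ?umul_mk ?uscale_mk ?uadd_mk ?umul_mk.

Definition Sm {R : realType} (hb : R[i]) (x : mon) : U R :=
  match x with
  | M1 => mk (fun _ _ => 1) z0 z0 z0
  | Mp => mk z0 (fun h1 h2 => - q hb * e2 hb h2 / e1 hb h1) z0 z0
  | Mm => mk z0 z0 (fun h1 h2 => q hb * e1 hb h1 / e2 hb h2) z0
  | Mpm => mk (fun h1 h2 => - cc hb h1 h2) z0 z0 (fun _ _ => 1)
  end.

Lemma qsq {R : realType} (hb : R[i]) : q hb ^+ 2 != 1 -> q hb * q hb - 1 != 0.
Proof. by rewrite subr_eq0 expr2. Qed.

Ltac side := rewrite ?q_neq0 ?e1_neq0 ?e2_neq0 ?Gu_neq0 ?qsq //.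

Lemma Smon_mk {R : realType} (hb : R[i]) x : q hb ^+ 2 != 1 -> Smon hb x = Sm hb x.
Proof.
move=> Hq.
case: x; rewrite /Smon /Sm; tomk; try done; apply: mk_ext => h1 h2 /=; norm;
  try field; side.
Qed.




Lemma Eg_mk {R : realType} (hb : R[i]) : Eg hb = mk z0 (fun h1 h2 => e2 hb h2) z0 z0.
Proof. rewrite /Eg; tomk; apply: mk_ext => h1 h2 /=; norm; ring. Qed.
Lemma Fg_mk {R : realType} (hb : R[i]) : Fg hb = mk z0 z0 (fun h1 h2 => (e2 hb h2)^-1) z0.
Proof. rewrite /Fg; tomk; apply: mk_ext => h1 h2 /=; norm; ring. Qed.

Lemma msum0 {R : realType} (F : mon -> R[i]) : (forall x, F x = 0) -> msum F = 0.
Proof. by move=> h; rewrite /msum !h !addr0. Qed.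
Lemma msum_1 {R : realType} (F : mon -> R[i]) : (forall x, x <> M1 -> F x = 0) -> msum F = F M1.
Proof. by move=> h; rewrite /msum (h Mp) // (h Mm) // (h Mpm) // !addr0. Qed.
Lemma msum_dd {R : realType} (f : mon -> mon -> R[i]) (c : R[i]) (z w : mon) :
  msum (fun x => msum (fun y => c * f x y * delta R x z * delta R y w)) = c * f z w.
Proof. by case: z; case: w; rewrite /msum /=; ring. Qed.

Lemma tmul_R {R : realType} (hb : R[i]) (t : T R) x y h1 h2 g1 g2 :
  tmul hb (Rcart hb) t x y h1 h2 g1 g2 = Rcart hb M1 M1 h1 h2 g1 g2 * t x y h1 h2 g1 g2.
Proof.
rewrite /tmul msum_1; last first.
  move=> x0 hx; apply: msum0 => y0; apply: msum0 => x1; apply: msum0 => y1.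
  by case: x0 hx => // _; rewrite /Rcart /= !mul0r.
rewrite msum_1; last first.
  move=> y0 hy; apply: msum0 => x1; apply: msum0 => y1.
  by case: y0 hy => // _; rewrite /Rcart /= !mulr0 !mul0r.
rewrite (msum_dd (fun x' y' => t x' y' (h1 + 0) (h2 + 0) (g1 + 0) (g2 + 0))).
by rewrite !addr0.
Qed.

Definition RM {R : realType} (hb : R[i]) (x y : mon) (h2 g2 : R[i]) : R[i] :=
  match x, y with
  | M1, M1 => 1
  | Mp, Mm => (1 - q hb ^+ 2) * e2 hb h2 / e2 hb g2
  | _, _ => 0 end.

Lemma Rmat_fun {R : realType} (hb : R[i]) : Rmat hb =
  fun x y h1 h2 g1 g2 => Rcart hb M1 M1 h1 h2 g1 g2 * RM hb x y h2 g2.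
Proof.
apply functional_extensionality => x; apply functional_extensionality => y.
do 4 (apply functional_extensionality => ?).
rewrite /Rmat tmul_R Eg_mk Fg_mk; congr (_ * _).
by case: x; case: y; rewrite /RM /tadd /tens /tscale /uone /cart /mk /z0 /=; ring.
Qed.

Lemma Rcart_G {R : realType} (hb a b : R[i]) :
  Rcart hb M1 M1 a b (- a) (- b) = Gu hb a b.
Proof. rewrite /Rcart /Gu /= !mul1r; congr (cexp _ * cexp _); ring. Qed.

Definition ucl {R : realType} (hb : R[i]) : U R :=
  mk (fun h1 h2 => Gu hb h1 h2 / (e1 hb h1 * e2 hb h2) ^+ 2) z0 z0
     (fun h1 h2 => Gu hb h1 h2 * (q hb - (q hb)^-1) / (e1 hb h1 * e2 hb h2)).

Lemma u_cl {R : realType} (hb : R[i]) : q hb ^+ 2 != 1 -> drinfeld_u hb (Rmat hb) = ucl hb.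
Proof.
move=> Hq.
rewrite /drinfeld_u /usum4 Rmat_fun; cbv beta.
rewrite !Smon_mk // /Sm /RM !basis_mk; cbv beta iota.
tomk. rewrite /ucl. apply: mk_ext => h1 h2 /=; rewrite ?Rcart_G; norm.
all: try (field; side).

Qed.



Definition Sucl {R : realType} (hb : R[i]) : U R :=
  mk (fun h1 h2 => Gu hb h1 h2) z0 z0
     (fun h1 h2 => Gu hb h1 h2 * (q hb - (q hb)^-1) * (e1 hb h1 * e2 hb h2)).

Lemma Su_cl {R : realType} (hb : R[i]) : q hb ^+ 2 != 1 -> antipode hb (ucl hb) = Sucl hb.
Proof.
move=> Hq.
rewrite /antipode /usum4 !Smon_mk // /Sm /ucl; cbv beta iota.
tomk. rewrite /Sucl. apply: mk_ext => h1 h2 /=; norm.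
all: try (field; side).
Qed.

Lemma Gz_E {R : realType} (hb h1 h2 : R[i]) : Gz hb h1 h2 = Gu hb h1 h2 ^+ 2.
Proof. rewrite /Gz /Gu exprMn !expr2 -!cexpD; congr cexp; by field. Qed.
Lemma Gr_E {R : realType} (hb h1 h2 : R[i]) : Gr hb h1 h2 = ((e1 hb h1 * e2 hb h2) ^+ 2)^-1.
Proof. rewrite exprMn e1_sq e2_sq /Gr -!cexpD -cexpN; congr cexp; by rewrite /ipi; field. Qed.

Lemma combine {R : realType} (A B L M c : R[i]) : L = M -> A - B = c * (L - M) -> A = B.
Proof. by move=> -> ; rewrite subrr mulr0 => /eqP; rewrite subr_eq0 => /eqP. Qed.

Local Close Scope complex_scope.

Theorem mainTheorem2 (R : realType) (hb : R[i]) :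
  q hb ^+ 2 != 1 ->
  let u := drinfeld_u hb (Rmat hb) in
  let Su := antipode hb u in
  let z := umul hb u Su in
  let a := uscale (1 - q hb ^+ 2) in
  let KK := umul hb (K1 hb) (K2 hb) in
  let KKinv := umul hb (K1inv hb) (K2inv hb) in
  (* u *)
  u = umul hb (cart (Gu hb))
        (uadd (@uone R) (a (umul hb (umul hb KKinv (Fg hb)) (Eg hb)))) /\
  (* S(u) *)
  Su = umul hb (cart (Gu hb))
        (uadd (@uone R) (a (umul hb (umul hb (Eg hb) (Fg hb)) KK))) /\
  (* z = u S(u) *)
  z = umul hb (cart (Gz hb))
        (uadd (@uone R) (a (uadd (umul hb (umul hb KK (Eg hb)) (Fg hb))
                                (umul hb (umul hb KKinv (Fg hb)) (Eg hb))))) /\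
  (* r = u S(u)^{-1}: S(u) is invertible, and u times its inverse is r *)
  (exists v : U R, umul hb Su v = @uone R /\ umul hb v Su = @uone R) /\
  (forall v : U R, umul hb Su v = @uone R -> umul hb v Su = @uone R ->
     umul hb u v = cart (Gr hb)).
Proof.
move=> Hq; cbv zeta.
rewrite u_cl // Su_cl //.
split.
  rewrite Eg_mk Fg_mk; tomk; rewrite /ucl; apply: mk_ext => h1 h2 /=; norm.
  all: try (field; side).
split.
  rewrite Eg_mk Fg_mk; tomk; rewrite /Sucl; apply: mk_ext => h1 h2 /=; norm.
  all: try (field; side).
split.
  rewrite Eg_mk Fg_mk; rewrite /ucl /Sucl; tomk; apply: mk_ext => h1 h2 /=; rewrite ?Gz_E; norm.
  all: try (field; side).
split.
  exists (mk (fun h1 h2 => (Gu hb h1 h2)^-1) z0 z0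
          (fun h1 h2 => - (q hb - (q hb)^-1) / (Gu hb h1 h2 * (e1 hb h1 * e2 hb h2)))).
  rewrite /Sucl; split; tomk; apply: mk_ext => h1 h2 /=; norm.
  all: try (field; side).
move=> v H _.
rewrite (U_eta v) in H *.
rewrite /Sucl ?uone_mk ?umul_mk in H; rewrite /ucl; tomk.
apply: mk_ext => h1 h2 /=.
4: apply: (combine _ _ _ _ (((e1 hb h1 * e2 hb h2) ^+ 2)^-1) (congr1 (fun f : U R => f Mpm h1 h2) H)).
3: apply: (combine _ _ _ _ (((e1 hb h1 * e2 hb h2) ^+ 2)^-1) (congr1 (fun f : U R => f Mm h1 h2) H)).
2: apply: (combine _ _ _ _ (((e1 hb h1 * e2 hb h2) ^+ 2)^-1) (congr1 (fun f : U R => f Mp h1 h2) H)).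
1: apply: (combine _ _ _ _ (((e1 hb h1 * e2 hb h2) ^+ 2)^-1) (congr1 (fun f : U R => f M1 h1 h2) H)).
all: rewrite /= ?Gr_E; norm.
all: field; side.
Qed.
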